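(* Let $A=(A,\oplus,\odot)$ be a skew brace and $B$ a characteristic subgroup of $A_{\oplus}$ such that $A_{\oplus}^{(n)}\leq B$ for some positive integer $n$. If $\mathrm{Aut}(A_{\oplus}/B)$ is solvable of derived length $m$, then $A_{\odot}^{(m+n)}\leq B$.
   Context: A skew brace is a set $A$ with two binary operations $\oplus,\odot$ such that $A_{\oplus}=(A,\oplus)$ and $A_{\odot}=(A,\odot)$ are groups and $a\odot(b\oplus c)=(a\odot b)\ominus a\oplus(a\odot c)$ for all $a,b,c\in A$, where $\ominus a$ is the inverse of $a$ in $A_{\oplus}$. The derived series of a group $G$ is indexed by $G^{(1)}=G$, $G^{(i+1)}=[G^{(i)},G^{(i)}]$; a solvable group $G$ has derived length $m$ when $G^{(m+1)}=1$ (with $m$ minimal). *)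

(* Defs.v *)
(* Groups are handled as "group data" (carrier, equality relation, product,
   inverse, unit) so that arbitrary (possibly infinite) groups, quotient
   groups (via a coset equivalence) and automorphism groups can be treated
   uniformly. *)


Record skew_brace := SkewBrace {
  sb_car :> Type;
  sb_add : sb_car -> sb_car -> sb_car;
  sb_opp : sb_car -> sb_car;
  sb_zero : sb_car;
  sb_mul : sb_car -> sb_car -> sb_car;
  sb_inv : sb_car -> sb_car;
  sb_one : sb_car;
  sb_addA : forall a b c, sb_add a (sb_add b c) = sb_add (sb_add a b) c;
  sb_add0l : forall a, sb_add sb_zero a = a;
  sb_addNl : forall a, sb_add (sb_opp a) a = sb_zero;
  sb_mulA : forall a b c, sb_mul a (sb_mul b c) = sb_mul (sb_mul a b) c;
  sb_mul1l : forall a, sb_mul sb_one a = a;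
  sb_mulVl : forall a, sb_mul (sb_inv a) a = sb_one;
  sb_compat : forall a b c,
    sb_mul a (sb_add b c) = sb_add (sb_add (sb_mul a b) (sb_opp a)) (sb_mul a c)
}.

Record grp_data := GrpData {
  gcar : Type;
  geq : gcar -> gcar -> Prop;
  gop : gcar -> gcar -> gcar;
  ginv : gcar -> gcar;
  gone : gcar
}.

Inductive gen (G : grp_data) (S : gcar G -> Prop) : gcar G -> Prop :=
  | gen_in : forall x, S x -> gen G S x
  | gen_one : gen G S (gone G)
  | gen_op : forall x y, gen G S x -> gen G S y -> gen G S (gop G x y)
  | gen_inv : forall x, gen G S x -> gen G S (ginv G x)
  | gen_eq : forall x y, geq G x y -> gen G S x -> gen G S y.

Definition commg (G : grp_data) (x y : gcar G) : gcar G :=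
  gop G (gop G (gop G (ginv G x) (ginv G y)) x) y.

Fixpoint dser (G : grp_data) (H : gcar G -> Prop) (k : nat) : gcar G -> Prop :=
  match k with
  | O => H
  | S k' => gen G (fun z => exists x y, dser G H k' x /\ dser G H k' y /\
                                      z = commg G x y)
  end.

(* The paper's indexing: H^(1) = H, H^(i+1) = [H^(i), H^(i)]  (i >= 1). *)
Definition derived (G : grp_data) (H : gcar G -> Prop) (i : nat) : gcar G -> Prop :=
  dser G H (pred i).

Definition derived_trivial (G : grp_data) (H : gcar G -> Prop) (i : nat) : Prop :=
  forall x, derived G H i x -> geq G x (gone G).

Definition solvable_derived_length (G : grp_data) (H : gcar G -> Prop) (m : nat) : Prop :=
  derived_trivial G H (S m) /\
  (forall k, derived_trivial G H (S k) -> m <= k).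

Definition add_grp (A : skew_brace) : grp_data :=
  GrpData (sb_car A) (@eq A) (sb_add A) (sb_opp A) (sb_zero A).

Definition mul_grp (A : skew_brace) : grp_data :=
  GrpData (sb_car A) (@eq A) (sb_mul A) (sb_inv A) (sb_one A).

Definition setT {T : Type} : T -> Prop := fun _ => True.

Definition add_subgroup (A : skew_brace) (B : A -> Prop) : Prop :=
  B (sb_zero A) /\
  (forall x y, B x -> B y -> B (sb_add A x y)) /\
  (forall x, B x -> B (sb_opp A x)).

Definition add_aut (A : skew_brace) (f : A -> A) : Prop :=
  (forall x y, f (sb_add A x y) = sb_add A (f x) (f y)) /\
  (forall x y, f x = f y -> x = y) /\
  (forall y, exists x, f x = y).

Definition add_characteristic (A : skew_brace) (B : A -> Prop) : Prop :=
  add_subgroup A B /\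
  forall f, add_aut A f -> forall y, (exists x, B x /\ f x = y) <-> B y.

Definition qeq (A : skew_brace) (B : A -> Prop) (x y : A) : Prop :=
  B (sb_add A (sb_opp A x) y).

(* An automorphism of A_(+)/B is represented by a pair (f, g) of maps
   A -> A inducing mutually inverse maps on cosets, f inducing a
   homomorphism of A_(+)/B.  Two such pairs are equal when they induce
   the same maps on A_(+)/B. *)
Definition aut_quot (A : skew_brace) (B : A -> Prop) : grp_data :=
  GrpData ((A -> A) * (A -> A))%type
    (fun p q => forall x, qeq A B (fst p x) (fst q x) /\ qeq A B (snd p x) (snd q x))
    (fun p q => (fun x => fst p (fst q x), fun x => snd q (snd p x)))
    ((fun p => (snd p, fst p)))
    (fun x => x, fun x => x).

Definition aut_quot_set (A : skew_brace) (B : A -> Prop)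
    (p : ((A -> A) * (A -> A))%type) : Prop :=
  (forall x y, qeq A B x y -> qeq A B (fst p x) (fst p y)) /\
  (forall x y, qeq A B x y -> qeq A B (snd p x) (snd p y)) /\
  (forall x y, qeq A B (fst p (sb_add A x y)) (sb_add A (fst p x) (fst p y))) /\
  (forall x, qeq A B (fst p (snd p x)) x /\ qeq A B (snd p (fst p x)) x).

(* Main.v *)
Require Import Defs.
From Stdlib Require Import Arith Lia.

Section Grp.
Variable T : Type.
Variable op : T -> T -> T.
Variable inv : T -> T.
Variable e : T.
Hypothesis opA : forall a b c, op a (op b c) = op (op a b) c.
Hypothesis op1l : forall a, op e a = a.
Hypothesis opVl : forall a, op (inv a) a = e.

Lemma g_opKl a b : op (inv a) (op a b) = b.
Proof. rewrite opA, opVl, op1l. reflexivity. Qed.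

Lemma g_opVr a : op a (inv a) = e.
Proof.
  rewrite <- (g_opKl (inv a) (op a (inv a))).
  rewrite (g_opKl a (inv a)). apply opVl.
Qed.

Lemma g_op1r a : op a e = a.
Proof. rewrite <- (opVl a), opA, g_opVr, op1l. reflexivity. Qed.

Lemma g_opKVl a b : op a (op (inv a) b) = b.
Proof. rewrite opA, g_opVr, op1l. reflexivity. Qed.

Lemma g_cancel_l a b c : op a b = op a c -> b = c.
Proof. intros H. rewrite <- (g_opKl a b), H, g_opKl. reflexivity. Qed.

Lemma g_inv_uniq a b : op a b = e -> b = inv a.
Proof. intros H. rewrite <- (g_opKl a b), H, g_op1r. reflexivity. Qed.

Lemma g_invK a : inv (inv a) = a.
Proof. symmetry. apply g_inv_uniq. apply opVl. Qed.

Lemma g_invop a b : inv (op a b) = op (inv b) (inv a).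
Proof.
  symmetry. apply g_inv_uniq. rewrite <- opA, (g_opKVl b (inv a)). apply g_opVr.
Qed.

Lemma g_inv1 : inv e = e.
Proof. symmetry. apply g_inv_uniq. apply op1l. Qed.
End Grp.

Section Brace.
Variable A : skew_brace.
Variable B : A -> Prop.
Hypothesis HB : add_characteristic A B.

Local Notation add := (sb_add A).
Local Notation opp := (sb_opp A).
Local Notation z0 := (sb_zero A).
Local Notation mul := (sb_mul A).
Local Notation inv := (sb_inv A).
Local Notation one := (sb_one A).

Definition addA := sb_addA A.
Definition add0l := sb_add0l A.
Definition addNl := sb_addNl A.
Definition addrN := g_opVr _ _ _ _ (sb_addA A) (sb_add0l A) (sb_addNl A).
Definition add0r := g_op1r _ _ _ _ (sb_addA A) (sb_add0l A) (sb_addNl A).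
Definition addKl := g_opKl _ _ _ _ (sb_addA A) (sb_add0l A) (sb_addNl A).
Definition addNKl := g_opKVl _ _ _ _ (sb_addA A) (sb_add0l A) (sb_addNl A).
Definition add_cancel := g_cancel_l _ _ _ _ (sb_addA A) (sb_add0l A) (sb_addNl A).
Definition opp_uniq := g_inv_uniq _ _ _ _ (sb_addA A) (sb_add0l A) (sb_addNl A).
Definition oppK := g_invK _ _ _ _ (sb_addA A) (sb_add0l A) (sb_addNl A).
Definition oppD := g_invop _ _ _ _ (sb_addA A) (sb_add0l A) (sb_addNl A).
Definition opp0 := g_inv1 _ _ _ _ (sb_addA A) (sb_add0l A) (sb_addNl A).
Definition mulA := sb_mulA A.
Definition mul1l := sb_mul1l A.
Definition mulVl := sb_mulVl A.
Definition mulVr := g_opVr _ _ _ _ (sb_mulA A) (sb_mul1l A) (sb_mulVl A).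
Definition invK := g_invK _ _ _ _ (sb_mulA A) (sb_mul1l A) (sb_mulVl A).
Definition invM := g_invop _ _ _ _ (sb_mulA A) (sb_mul1l A) (sb_mulVl A).
Definition inv1 := g_inv1 _ _ _ _ (sb_mulA A) (sb_mul1l A) (sb_mulVl A).

Lemma one_zero : one = z0.
Proof.
  pose proof (sb_compat A one z0 z0) as H.
  rewrite add0l in H. rewrite !mul1l in H. rewrite add0r, add0l in H.
  rewrite <- (oppK one), <- H, opp0. reflexivity.
Qed.

Definition lam (a x : A) : A := add (opp a) (mul a x).

Lemma lam_add a x y : lam a (add x y) = add (lam a x) (lam a y).
Proof. unfold lam. rewrite sb_compat. repeat rewrite addA. reflexivity. Qed.

Lemma lam0 a : lam a z0 = z0.
Proof.
  apply (add_cancel (lam a z0)).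
  rewrite <- lam_add, add0l, add0r. reflexivity.
Qed.

Lemma lam_opp a x : lam a (opp x) = opp (lam a x).
Proof.
  apply opp_uniq. rewrite <- lam_add, addrN, lam0. reflexivity.
Qed.

Lemma lam_mul a b c : lam (mul a b) c = lam a (lam b c).
Proof.
  unfold lam at 3. rewrite lam_add, lam_opp. unfold lam.
  rewrite oppD, oppK, mulA. rewrite <- addA, addNKl. reflexivity.
Qed.

Lemma lam_one x : lam one x = x.
Proof. unfold lam. rewrite mul1l, one_zero, opp0, add0l. reflexivity. Qed.

Lemma lam_inv_l a x : lam a (lam (inv a) x) = x.
Proof. rewrite <- lam_mul, mulVr, lam_one. reflexivity. Qed.

Lemma lam_inv_r a x : lam (inv a) (lam a x) = x.
Proof. rewrite <- lam_mul, mulVl, lam_one. reflexivity. Qed.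

Lemma lam_aut a : add_aut A (lam a).
Proof.
  split; [|split].
  - apply lam_add.
  - intros x y H. rewrite <- (lam_inv_r a x), H, lam_inv_r. reflexivity.
  - intros y. exists (lam (inv a) y). apply lam_inv_l.
Qed.

Lemma B0 : B z0.
Proof. destruct HB as [[H _] _]. exact H. Qed.
Lemma Badd x y : B x -> B y -> B (add x y).
Proof. destruct HB as [[_ [H _]] _]. apply H. Qed.
Lemma Bopp x : B x -> B (opp x).
Proof. destruct HB as [[_ [_ H]] _]. apply H. Qed.

Lemma Baut f : add_aut A f -> forall x, B x -> B (f x).
Proof.
  intros Hf x Hx. destruct HB as [_ H]. apply (H f Hf). exists x; auto.
Qed.

Lemma add_cancel_r a b c : add b a = add c a -> b = c.
Proof.
  intros H. rewrite <- (add0r b), <- (addrN a), addA, H, <- addA, addrN, add0r.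
  reflexivity.
Qed.

Lemma conj_aut y : add_aut A (fun t => add (add (opp y) t) y).
Proof.
  split; [|split].
  - intros s t. repeat rewrite <- addA. rewrite addNKl. reflexivity.
  - intros s t H. apply add_cancel_r in H. apply add_cancel in H. exact H.
  - intros t. exists (add (add y t) (opp y)).
    repeat rewrite <- addA. rewrite addKl, addNl, add0r. reflexivity.
Qed.

Lemma Bnorm y z : B z -> B (add (add (opp y) z) y).
Proof. intros Hz. apply (Baut _ (conj_aut y)). exact Hz. Qed.

Lemma qeq_refl x : qeq A B x x.
Proof. unfold qeq. rewrite addNl. apply B0. Qed.

Lemma qeq_sym x y : qeq A B x y -> qeq A B y x.
Proof. unfold qeq. intros H. apply Bopp in H. rewrite oppD, oppK in H. exact H. Qed.

Lemma qeq_trans x y z : qeq A B x y -> qeq A B y z -> qeq A B x z.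
Proof.
  unfold qeq. intros H1 H2. pose proof (Badd _ _ H1 H2) as H.
  rewrite <- addA, addNKl in H. exact H.
Qed.

Lemma qeq_add x x' y y' : qeq A B x x' -> qeq A B y y' -> qeq A B (add x y) (add x' y').
Proof.
  unfold qeq. intros H1 H2.
  pose proof (Badd _ _ (Bnorm y _ H1) H2) as H.
  replace (add (opp (add x y)) (add x' y')) with
    (add (add (add (opp y) (add (opp x) x')) y) (add (opp y) y')).
  exact H.
  rewrite oppD. repeat rewrite <- addA. rewrite addNKl. reflexivity.
Qed.

Lemma qeq_opp x x' : qeq A B x x' -> qeq A B (opp x) (opp x').
Proof.
  intros H. apply qeq_sym in H. unfold qeq in *.
  pose proof (Bnorm (opp x) _ H) as H'.
  rewrite oppK in *. repeat rewrite <- addA in H'. rewrite addrN, add0r in H'.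
  exact H'.
Qed.

Lemma B_of_qeq x y : B y -> qeq A B x y -> B x.
Proof.
  intros Hy Hq. apply qeq_sym in Hq. unfold qeq in Hq.
  pose proof (Badd _ _ Hy Hq) as H. rewrite addNKl in H. exact H.
Qed.

Definition K (a : A) : Prop := forall z, qeq A B (lam a z) z.

Lemma K_one : K one.
Proof. intros z. rewrite lam_one. apply qeq_refl. Qed.

Lemma K_mul a b : K a -> K b -> K (mul a b).
Proof.
  intros Ha Hb z. rewrite lam_mul. eapply qeq_trans. apply Ha. apply Hb.
Qed.

Lemma K_inv a : K a -> K (inv a).
Proof.
  intros Ha z. apply qeq_sym. pose proof (Ha (lam (inv a) z)) as H.
  rewrite lam_inv_l in H. exact H.
Qed.

Lemma K_mulq a c : K a -> qeq A B (mul a c) (add a c).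
Proof.
  intros Ha. replace (mul a c) with (add a (lam a c)).
  apply qeq_add. apply qeq_refl. apply Ha.
  unfold lam. apply addNKl.
Qed.

Lemma K_invq a : K a -> qeq A B (inv a) (opp a).
Proof.
  intros Ha. pose proof (qeq_sym _ _ (K_mulq a (inv a) Ha)) as H.
  rewrite mulVr, one_zero in H.
  pose proof (qeq_add _ _ _ _ (qeq_refl (opp a)) H) as H'.
  rewrite addKl, add0r in H'. exact H'.
Qed.

Lemma K_comm a b a' b' : K a -> K b -> qeq A B a a' -> qeq A B b b' ->
  qeq A B (commg (mul_grp A) a b) (commg (add_grp A) a' b').
Proof.
  intros Ka Kb ha hb. unfold commg; simpl.
  assert (h1 : qeq A B (mul (inv a) (inv b)) (add (opp a') (opp b'))).
  { eapply qeq_trans. apply K_mulq. apply K_inv; exact Ka.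
    apply qeq_add; (eapply qeq_trans; [apply K_invq; assumption| apply qeq_opp; assumption]). }
  assert (h2 : qeq A B (mul (mul (inv a) (inv b)) a) (add (add (opp a') (opp b')) a')).
  { eapply qeq_trans. apply K_mulq. apply K_mul; apply K_inv; assumption.
    apply qeq_add; assumption. }
  eapply qeq_trans. apply K_mulq. apply K_mul; [apply K_mul; apply K_inv|]; assumption.
  apply qeq_add; assumption.
Qed.

Definition Lam (a : A) : gcar (aut_quot A B) := (lam a, lam (inv a)).

Lemma geq_ext (p q : gcar (aut_quot A B)) :
  (forall z, fst p z = fst q z) -> (forall z, snd p z = snd q z) ->
  geq (aut_quot A B) p q.
Proof. intros H1 H2 z. simpl. rewrite H1, H2. split; apply qeq_refl. Qed.

Lemma Lam_set a : aut_quot_set A B (Lam a).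
Proof.
  unfold aut_quot_set, Lam, qeq; simpl.
  split; [|split; [|split]].
  - intros x y H. rewrite <- lam_opp, <- lam_add. apply (Baut _ (lam_aut a)). exact H.
  - intros x y H. rewrite <- lam_opp, <- lam_add. apply (Baut _ (lam_aut (inv a))). exact H.
  - intros x y. rewrite lam_add. rewrite addNl. apply B0.
  - intros x. rewrite lam_inv_l, lam_inv_r, addNl. split; apply B0.
Qed.

Lemma step2 k : forall x, dser (mul_grp A) setT k x ->
  dser (aut_quot A B) (aut_quot_set A B) k (Lam x).
Proof.
  induction k as [|k IH]; intros x H.
  - simpl. apply Lam_set.
  - simpl in H. simpl. induction H as [x Hx| |x y _ IHx _ IHy|x _ IHx|x y Hxy _ IHx].
    + destruct Hx as [a [b [Ha [Hb ->]]]].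
      apply gen_eq with (commg (aut_quot A B) (Lam a) (Lam b)).
      * apply geq_ext; intros z; unfold Lam, commg; simpl.
        -- repeat rewrite lam_mul. reflexivity.
        -- repeat rewrite invM. repeat rewrite invK. repeat rewrite lam_mul. reflexivity.
      * apply gen_in. exists (Lam a), (Lam b). split; [apply IH; exact Ha|].
        split; [apply IH; exact Hb| reflexivity].
    + apply gen_eq with (gone (aut_quot A B)).
      * apply geq_ext; intros z; unfold Lam; simpl.
        -- rewrite lam_one. reflexivity.
        -- rewrite inv1, lam_one. reflexivity.
      * apply gen_one.
    + apply gen_eq with (gop (aut_quot A B) (Lam x) (Lam y)).
      * apply geq_ext; intros z; unfold Lam; simpl.
        -- rewrite lam_mul. reflexivity.
        -- rewrite invM, lam_mul. reflexivity.
      * apply gen_op; assumption.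
    + apply gen_eq with (ginv (aut_quot A B) (Lam x)).
      * apply geq_ext; intros z; unfold Lam; simpl.
        -- reflexivity.
        -- rewrite invK. reflexivity.
      * apply gen_inv; assumption.
    + simpl in Hxy. subst. exact IHx.
Qed.

Lemma step3 m (Hsolv : derived_trivial (aut_quot A B) (aut_quot_set A B) (S m)) j :
  forall x, dser (mul_grp A) setT (m + j) x ->
  K x /\ exists y, dser (add_grp A) setT j y /\ qeq A B x y.
Proof.
  induction j as [|j IH]; intros x H.
  - rewrite Nat.add_0_r in H. split.
    + intros z. exact (proj1 (Hsolv (Lam x) (step2 m x H) z)).
    + exists x. split; [exact I | apply qeq_refl].
  - rewrite Nat.add_succ_r in H. simpl in H.
    induction H as [x Hx| |x y _ IHx _ IHy|x _ IHx|x y Hxy _ IHx].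
    + destruct Hx as [a [b [Ha [Hb ->]]]].
      destruct (IH a Ha) as [Ka [a' [Ha' qa]]].
      destruct (IH b Hb) as [Kb [b' [Hb' qb]]].
      split.
      * unfold commg; simpl.
        apply K_mul; [apply K_mul; [apply K_mul; apply K_inv|]|]; assumption.
      * exists (commg (add_grp A) a' b'). split.
        -- simpl. apply gen_in. exists a', b'. auto.
        -- apply K_comm; assumption.
    + split; [apply K_one|]. exists z0. split.
      * simpl. apply (gen_one (add_grp A)).
      * simpl. rewrite one_zero. apply qeq_refl.
    + destruct IHx as [Kx [x' [Hx' qx]]]. destruct IHy as [Ky [y' [Hy' qy]]].
      split; [apply K_mul; assumption|]. exists (add x' y'). split.
      * simpl. apply (gen_op (add_grp A)); assumption.
      * eapply qeq_trans. apply K_mulq; assumption. apply qeq_add; assumption.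
    + destruct IHx as [Kx [x' [Hx' qx]]].
      split; [apply K_inv; assumption|]. exists (opp x'). split.
      * simpl. apply (gen_inv (add_grp A)); assumption.
      * eapply qeq_trans. apply K_invq; assumption. apply qeq_opp; assumption.
    + simpl in Hxy. subst. exact IHx.
Qed.

End Brace.

Theorem corollary3p2 (A : skew_brace) (B : A -> Prop) (n m : nat) :
  add_characteristic A B ->
  0 < n ->
  (forall x, derived (add_grp A) setT n x -> B x) ->
  solvable_derived_length (aut_quot A B) (aut_quot_set A B) m ->
  forall x, derived (mul_grp A) setT (m + n) x -> B x.
Proof.
  intros HB Hn Hadd Hsolv x Hx.
  destruct n as [|n]; [lia|].
  unfold derived in Hx.
  replace (pred (m + S n)) with (m + n) in Hx by lia.
  destruct (step3 A B HB m (proj1 Hsolv) n x Hx) as [_ [y [Hy q]]].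
  apply (B_of_qeq A B HB x y); [|exact q].
  apply Hadd. exact Hy.
Qed.
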